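(* Let $\psi$ be a non-negative locally finite Borel measure on $\mathbb R^d$. If every (open) half-space of $\mathbb R^d$ has infinite $\psi$-measure, then all Voronoi territories with respect to $\psi$ are bounded. In particular, if $\Psi$ is a stationary random measure on $\mathbb R^d$ which is almost surely non-zero, then almost surely all Voronoi territories with respect to $\Psi_\omega$ are bounded.
   Context: $\overline B(x,r)$ denotes the closed ball. Voronoi density with respect to $\psi$ (with $\psi(\mathbb R^d)\ge 1$): for $x\in\mathbb R^d$ let $s(x)=\sup\{s\in\mathbb R:\psi(\overline B(x,s))\le1\}$ and $v(x,\xi)=1$ if $|x-\xi|<s(x)$, $v(x,\xi)=c$ if $|x-\xi|=s(x)$, $v(x,\xi)=0$ if $|x-\xi|>s(x)$, where $c\in[0,1]$ is such that $\int v(x,\xi)\psi(d\xi)=1$, with $c=1$ if $s(x)=\infty$ or $\psi(\partial\overline B(x,s(x)))=0$. The Voronoi territory of $\xi$ with respect to $\psi$ is $\{x:v(x,\xi)>0\}$. Random setup: measurable space $(\Omega,\mathcal F)$ with a measurable flow $(\theta_s)_{s\in\mathbb R^d}$ and probability $\mathbb P$; a random measure is a measurable $\Psi:\Omega\to M$ (non-negative locally finite Borel measures), stationary if $\mathbb P$ is invariant under all $\theta_s$ and $\Psi(\theta_s\omega)(B)=\Psi(\omega)(B+s)$ for all $s,\omega,B$. *)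

(* Defs.v *)
From HB Require Import structures.
From mathcomp Require Import all_boot all_order all_algebra.
From mathcomp Require Import all_classical all_reals all_analysis measurable_realfun.
Set Implicit Arguments. Unset Strict Implicit. Unset Printing Implicit Defensive.
Import Order.TTheory GRing.Theory Num.Theory.
Import numFieldNormedType.Exports.
Local Open Scope classical_set_scope.
Local Open Scope ring_scope.

Definition borelRd (R : realType) (d : nat) := g_sigma_algebraType (@open 'rV[R]_d).

Section Voronoi.
Variables (R : realType) (d : nat).

Definition enorm (x : 'rV[R]_d) : R := Num.sqrt (\sum_i x ord0 i ^+ 2).

Definition cball (x : 'rV[R]_d) (r : R) : set (borelRd R d) :=
  [set y : 'rV[R]_d | enorm (x - y) <= r].
Definition oball (x : 'rV[R]_d) (r : R) : set (borelRd R d) :=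
  [set y : 'rV[R]_d | enorm (x - y) < r].
Definition sphere (x : 'rV[R]_d) (r : R) : set (borelRd R d) :=
  [set y : 'rV[R]_d | enorm (x - y) = r].

Definition dotv (u x : 'rV[R]_d) : R := \sum_i u ord0 i * x ord0 i.
Definition open_halfspace (u : 'rV[R]_d) (a : R) : set (borelRd R d) :=
  [set x : 'rV[R]_d | a < dotv u x].
Definition is_halfspace (H : set (borelRd R d)) : Prop :=
  exists (u : 'rV[R]_d) (a : R), u != 0 /\ H = open_halfspace u a.

Variable psi : {measure set (borelRd R d) -> \bar R}.

Definition locally_finite : Prop :=
  forall (x : 'rV[R]_d) (r : R), (psi (cball x r) < +oo)%E.

Definition vor_s (x : 'rV[R]_d) : \bar R :=
  ereal_sup [set r%:E | r in [set r : R | (psi (cball x r) <= 1)%E]].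

(* the constant c of the definition: the unique c in [0,1] with
   psi(open ball) + c * psi(sphere) = 1, and c = 1 if s(x) = +oo or
   psi(sphere) = 0 *)
Definition vor_c (x : 'rV[R]_d) : R :=
  match vor_s x with
  | r%:E => if psi (sphere x r) == 0%E then 1
            else fine (1%:E - psi (oball x r))%E / fine (psi (sphere x r))
  | _ => 1
  end.

Definition vor_v (x xi : 'rV[R]_d) : R :=
  if ((enorm (x - xi))%:E < vor_s x)%E then 1
  else if (enorm (x - xi))%:E == vor_s x then vor_c x
  else 0.

Definition territory (xi : 'rV[R]_d) : set 'rV[R]_d :=
  [set x | 0 < vor_v x xi].

End Voronoi.

Definition bounded_set_Rd (R : realType) (d : nat) (A : set 'rV[R]_d) : Prop :=
  exists r : R, forall x, A x -> enorm x <= r.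

(* Main.v *)
Require Import Defs.
From HB Require Import structures.
From mathcomp Require Import all_boot all_order all_algebra.
From mathcomp Require Import all_classical all_reals all_analysis measurable_realfun.
From mathcomp Require Import ring lra.
Import Order.TTheory GRing.Theory Num.Theory.
Import numFieldNormedType.Exports.
Local Open Scope classical_set_scope.
Local Open Scope ring_scope.
Section S.
Variables (R : realType) (d : nat).
Implicit Types (x y z t u v : 'rV[R]_d).

Lemma sum_cont (F : 'I_d -> 'rV[R]_d -> R) :
  (forall i, continuous (F i)) -> continuous (fun y => \sum_i F i y).
Proof. move=> Fc; apply: continuous_big => //; exact: add_continuous. Qed.

Lemma coordc (i : 'I_d) : continuous (fun y : 'rV[R]_d => y ord0 i).
Proof. move=> y; exact: coord_continuous. Qed.

Lemma dotv_cont v : continuous (dotv v).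
Proof.
apply: sum_cont => i y.
have := @continuousM R _ (fun=> v ord0 i) (fun z : 'rV[R]_d => z ord0 i) y (@cst_continuous _ _ _ _) (coordc i y).
by [].
Qed.

Lemma enorm_cont x : continuous (fun y : 'rV[R]_d => enorm (x - y)).
Proof.
move=> y.
have h : continuous (fun y : 'rV[R]_d => \sum_i (x - y) ord0 i ^+ 2).
  apply: sum_cont => i z /=.
  have -> : (fun y : 'rV[R]_d => (x - y) ord0 i ^+ 2) = (fun y => (x ord0 i - y ord0 i) * (x ord0 i - y ord0 i)).
    by apply: funext => w; rewrite !mxE expr2.
  have cb : {for z, continuous (fun y : 'rV[R]_d => x ord0 i - y ord0 i)}.
    have := @continuousB R R^o _ (fun=> x ord0 i) (fun z : 'rV[R]_d => z ord0 i) z (@cst_continuous _ _ _ _) (coordc i z).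
    by [].
  have := @continuousM R _ _ _ z cb cb. by [].
exact: (continuous_comp (h y) (@sqrt_continuous R _)).
Qed.

Lemma open_meas (A : set 'rV[R]_d) : open A -> measurable (A : set (borelRd R d)).
Proof. move=> oA. exact: sub_sigma_algebra. Qed.

Lemma closed_meas (A : set 'rV[R]_d) : closed A -> measurable (A : set (borelRd R d)).
Proof.
move=> cA; rewrite -[A]setCK; apply: measurableC; apply: open_meas.
exact: closed_openC.
Qed.

Lemma cball_meas x r : measurable (cball x r).
Proof.
apply: closed_meas.
have -> : (cball x r : set 'rV[R]_d) = (fun y => enorm (x - y)) @^-1` [set a | a <= r] by [].
apply: preimage_closed; last exact: closed_le.
by move=> y _; exact: enorm_cont.
Qed.

Lemma coord_le x i : `|x ord0 i| <= `|x|.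
Proof.
rewrite [leRHS]/Num.norm /= mx_normrE.
apply/bigmax_geP; right => /=; exists (ord0, i) => //.
Qed.

Lemma dotv_bound u z : `|dotv u z| <= d%:R * `|u| * `|z|.
Proof.
rewrite /dotv; apply: le_trans (ler_norm_sum _ _ _) _.
have -> : d%:R * `|u| * `|z| = \sum_(i < d) (`|u| * `|z|).
  by rewrite sumr_const card_ord -mulrA mulr_natl.
apply: ler_sum => i _; rewrite normrM.
by apply: ler_pM => //; exact: coord_le.
Qed.

Lemma enorm_sq x : enorm x ^+ 2 = \sum_i x ord0 i ^+ 2.
Proof. by rewrite /enorm sqr_sqrtr // sumr_ge0 // => i _; exact: sqr_ge0. Qed.

Lemma enorm_ge0 x : 0 <= enorm x.
Proof. exact: sqrtr_ge0. Qed.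

Lemma enorm_sq_bound z : enorm z ^+ 2 <= d%:R * `|z| ^+ 2.
Proof.
rewrite enorm_sq.
have -> : d%:R * `|z| ^+ 2 = \sum_(i < d) `|z| ^+ 2.
  by rewrite sumr_const card_ord mulr_natl.
apply: ler_sum => i _; rewrite -real_normK ?num_real //.
by rewrite lerXn2r ?nnegrE // coord_le.
Qed.

Lemma enorm_le_norm z : enorm z <= d%:R * `|z|.
Proof.
rewrite -(@ler_pXn2r _ 2) ?nnegrE ?enorm_ge0 ?mulr_ge0 //.
apply: le_trans (enorm_sq_bound z) _; rewrite exprMn.
apply: ler_wpM2r; first exact: exprn_ge0.
rewrite -natrX ler_nat; case: d => // n.
by rewrite expnS leq_pmulr.
Qed.

Lemma enorm_expand t z :
  enorm (t - z) ^+ 2 = enorm t ^+ 2 - 2 * dotv t z + enorm z ^+ 2.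
Proof.
rewrite !enorm_sq /dotv mulr_sumr -sumrB -big_split /=.
by apply: eq_bigr => i _; rewrite !mxE; ring.
Qed.

Lemma dotvB u y z : dotv u (y - z) = dotv u y - dotv u z.
Proof. by rewrite /dotv -sumrB; apply: eq_bigr => i _; rewrite !mxE; ring. Qed.

Lemma dotvBl u v z : dotv (u - v) z = dotv u z - dotv v z.
Proof. by rewrite /dotv -sumrB; apply: eq_bigr => i _; rewrite !mxE; ring. Qed.

Lemma dotvZl (c : R) u z : dotv (c *: u) z = c * dotv u z.
Proof. by rewrite /dotv mulr_sumr; apply: eq_bigr => i _; rewrite !mxE; ring. Qed.


Lemma terr_le (psi : {measure set (borelRd R d) -> \bar R}) x xi :
  territory psi xi x -> ((enorm (x - xi))%:E <= vor_s psi x)%E.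
Proof.
rewrite /territory /vor_v /=.
case: ifPn => [/ltW //|_]; case: ifPn => [/eqP -> _ //|_].
by rewrite ltxx.
Qed.

Lemma ball_le1 (psi : {measure set (borelRd R d) -> \bar R}) x r :
  (r%:E < vor_s psi x)%E -> (psi (cball x r) <= 1)%E.
Proof.
move=> /ereal_sup_gt [e [r' /= Hr' <-]]; rewrite lte_fin => rr'.
apply: le_trans Hr'; apply: le_measure; rewrite ?inE; try exact: cball_meas.
by move=> y /=; move/le_trans; apply; exact: ltW.
Qed.


Lemma core (psi : {measure set (borelRd R d) -> \bar R})
  (Hh : forall H, is_halfspace H -> psi H = +oo%E) xi :
  bounded_set_Rd (territory psi xi).
Proof.
apply: contrapT => nb.
have unb : forall L : R, exists x, territory psi xi x /\ L < `|x - xi|.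
  move=> L; apply: contrapT => H0; apply: nb.
  exists (d%:R * (L + `|xi|)) => x Tx.
  have xL : `|x - xi| <= L.
    rewrite leNgt; apply/negP => Lx; apply: H0; by exists x.
  apply: le_trans (enorm_le_norm x) _; apply: ler_wpM2l => //.
  rewrite -[x in `|x|](subrK xi); apply: le_trans (ler_normD _ _) _.
  by rewrite lerD2r.
pose S := [set v : 'rV[R]_d | `|v| = 1].
pose E := fun L : R => [set v : 'rV[R]_d | exists x, [/\ territory psi xi x,
   L < `|x - xi| & v = `|x - xi|^-1 *: (x - xi)]].
pose F := filter_from [set L : R | 0 <= L] E.
have FF : Filter F.
  apply: filter_from_filter; first by exists (0:R); rewrite /= lexx.
  move=> i j i0 j0; exists (Num.max i j); first by rewrite /= le_max i0.
  move=> v [x [Tx Lx ->]]; split; exists x; split => //.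
    by apply: le_lt_trans Lx; rewrite le_max lexx.
  by apply: le_lt_trans Lx; rewrite le_max lexx orbT.
have PF : ProperFilter F.
  apply: filter_from_proper => L _; have [x [Tx Lx]] := unb L.
  by exists (`|x - xi|^-1 *: (x - xi)); exists x.
have FS : F S.
  exists 0; first by rewrite /= lexx. move=> v [x [Tx Lx ->]]; rewrite /S /= normrZ normfV normr_id.
  by rewrite mulVf // gt_eqF.
have cS : compact S.
  apply: bounded_closed_compact.
    exists 1; split; first exact: num_real.
    by move=> M M1 v Sv; rewrite /= Sv ltW.
  have -> : S = (fun v : 'rV[R]_d => `|v|) @^-1` [set a | a = 1] by [].
  apply: preimage_closed; last exact: closed_eq.
  by move=> y _; exact: norm_continuous.
have [v [Sv clv]] := cS F PF FS.
have v0 : v != 0 by apply/eqP => v0; move: Sv; rewrite /S /= v0 normr0 => /eqP; rewrite eq_sym oner_eq0.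
have psiH : psi (open_halfspace v (dotv v xi)) = +oo%E.
  by apply: Hh; exists v, (dotv v xi).
pose A := fun n : nat => [set y : 'rV[R]_d | dotv v xi + n.+1%:R^-1 < dotv v y] `&` ball xi n.+1%:R.
have mA : forall n, measurable (A n : set (borelRd R d)).
  move=> n; apply: open_meas; apply: openI; last exact: ball_open.
  have -> : [set y : 'rV[R]_d | dotv v xi + n.+1%:R^-1 < dotv v y] =
    dotv v @^-1` [set a | dotv v xi + n.+1%:R^-1 < a] by [].
  apply: open_comp; last exact: open_gt.
  by move=> y _; exact: dotv_cont.
have UA : \bigcup_n A n = open_halfspace v (dotv v xi).
  apply/seteqP; split.
    move=> y [n _ [/= h _]]; rewrite /open_halfspace /=.
    by apply: lt_trans h; rewrite ltrDl invr_gt0 ltr0Sn.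
  move=> y /= Hy.
  pose c := dotv v y - dotv v xi.
  have c0 : 0 < c by rewrite subr_gt0.
  exists (Num.truncn (c^-1 + `|xi - y|)) => //; split => /=.
    rewrite -ltrBrDl -/c -[c]invrK ltf_pV2 ?posrE ?invr_gt0 ?ltr0Sn //.
    apply: le_lt_trans (truncnS_gt _); by rewrite invrK lerDl.
  rewrite -ball_normE /ball_ /=.
  apply: le_lt_trans (truncnS_gt _); rewrite lerDr invr_ge0; exact: ltW.
have ndA : {homo A : n m / (n <= m)%N >-> (n <= m)%O}.
  move=> n m nm; rewrite subsetEset => y [/= h1 h2]; split => /=.
    apply: le_lt_trans h1; rewrite lerD2l lef_pV2 ?posrE ?ltr0Sn // ler_nat.
    by [].
  move: h2; rewrite -!ball_normE /ball_ /= => h2; apply: lt_le_trans h2 _.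
  by rewrite ler_nat.
have cvA : (psi \o A) x @[x --> \oo] --> +oo%E.
  rewrite -psiH -UA; exact: (nondecreasing_cvg_mu mA (bigcup_measurable (fun k _ => mA k)) ndA).
have [N0 _ HN0] := (cvgeyPge _).1 cvA 2.
have {HN0} psiA : (2%:E <= psi (A N0))%E by apply: HN0; rewrite /= leqnn.
pose N : R := N0.+1%:R.
have N0p : 0 < N by rewrite ltr0Sn.
pose eta := (2 * (d%:R + 1) * N ^+ 2)^-1.
pose Lb := N * (d%:R * N ^+ 2 + 1).
have eta0 : 0 < eta by rewrite invr_gt0 !mulr_gt0 ?exprn_gt0 // ltr_wpDl.
have Lb0 : 0 <= Lb.
  rewrite /Lb; apply: mulr_ge0 (ltW N0p) _; apply: addr_ge0 => //.
  by apply: mulr_ge0 => //; apply: exprn_ge0; exact: ltW.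
have [w [[x [Tx Lx ew]] Bw]] : E Lb `&` ball v eta !=set0.
  apply: clv; last exact: nbhsx_ballx.
  by exists Lb.
set t := x - xi in Lx ew *.
set l := `|t| in Lx ew *.
have l0 : 0 < l by apply: le_lt_trans Lx.
have key : forall y, A N0 y -> enorm (y - xi) ^+ 2 + 1 <= 2 * dotv t (y - xi).
  move=> y [/= h1 h2].
  set z := y - xi.
  have ha : N^-1 < dotv v z.
    by rewrite /z dotvB; move: h1; rewrite /N ltrBrDl addrC.
  have hz : `|z| < N.
    by move: h2; rewrite -ball_normE /ball_ /= distrC.
  have hw : `|w - v| < eta.
    by move: Bw; rewrite -ball_normE /ball_ /= distrC.
  have hb : `|dotv (w - v) z| <= d%:R * eta * N.
    apply: le_trans (dotv_bound _ _) _.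
    rewrite -!mulrA; apply: ler_wpM2l => //; apply: ler_pM => //; exact: ltW.
  have hdeta : d%:R * eta * N <= (2 * N)^-1.
    have -> : d%:R * eta * N = (d%:R / (d%:R + 1)) * (2 * N)^-1.
      rewrite /eta /N; field.
      by rewrite [1 + _]addrC !natr1 !pnatr_eq0.
    apply: ler_piMl; first by rewrite invr_ge0 mulr_ge0 // ltW.
    rewrite ler_pdivrMr ?ltr_wpDl //.
    by rewrite mul1r lerDl.
  have hw2 : (2 * N)^-1 <= dotv w z.
    have ew2 : dotv w z = dotv v z + dotv (w - v) z by rewrite dotvBl addrC subrK.
    have := hb; rewrite ler_norml => /andP[hb1 _].
    have e2 : N^-1 = (2 * N)^-1 + (2 * N)^-1.
      by rewrite /N; field; rewrite [1 + _]addrC natr1 pnatr_eq0.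
    move: ha hb1 hdeta e2; rewrite ew2.
    set a := N^-1; set b := (2 * N)^-1; set c := d%:R * eta * N.
    lra.
  have etz : enorm z ^+ 2 <= d%:R * N ^+ 2.
    apply: le_trans (enorm_sq_bound z) _; apply: ler_wpM2l => //.
    by rewrite !expr2; apply: ler_pM => //; exact: ltW.
  have et : dotv t z = l * dotv w z.
    by rewrite ew dotvZl mulrA mulfV ?gt_eqF // mul1r.
  have hl : Lb * (2 * N)^-1 <= l * dotv w z.
    apply: ler_pM => //; first by rewrite invr_ge0 mulr_ge0 // ltW.
    exact: ltW.
  have eL : Lb * (2 * N)^-1 = (d%:R * N ^+ 2 + 1) / 2.
    by rewrite /Lb /N; field; rewrite [1 + _]addrC natr1 pnatr_eq0.
  move: hl etz; rewrite eL -et.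
  set p := dotv t z; set q := d%:R * N ^+ 2; set r := enorm z ^+ 2.
  lra.
have [y0 Ay0] : A N0 !=set0.
  apply/set0P/negP => /eqP A0; move: psiA; rewrite A0 measure0 => h.
  have : (0 < 2%:E :> \bar R)%E by rewrite lte_fin.
  by rewrite ltNge h.
have en1 : 1 <= enorm t ^+ 2.
  have := key y0 Ay0; have := enorm_expand t (y0 - xi).
  have := sqr_ge0 (enorm (t - (y0 - xi))).
  set p := enorm (t - (y0 - xi)) ^+ 2; set q := dotv t (y0 - xi).
  set r := enorm (y0 - xi) ^+ 2; set s := enorm t ^+ 2.
  lra.
pose r := Num.sqrt (enorm t ^+ 2 - 1).
have sub : A N0 `<=` cball x r.
  move=> y Ay; rewrite /cball /=.
  have -> : x - y = t - (y - xi) by rewrite /t opprB addrA subrK.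
  rewrite -[enorm _]ger0_norm ?enorm_ge0 // -sqrtr_sqr /r; apply: ler_wsqrtr.
  rewrite enorm_expand; have := key y Ay.
  set p := dotv t (y - xi); set q := enorm (y - xi) ^+ 2.
  lra.
have rlt : r < enorm t.
  rewrite /r -[X in _ < X]ger0_norm ?enorm_ge0 // -sqrtr_sqr ltr_sqrt.
    lra.
  lra.
have H1 : (r%:E < vor_s psi x)%E by apply: lt_le_trans (@terr_le psi x xi Tx); rewrite lte_fin.
have h2 := @ball_le1 psi x r H1.
have h1 : (psi (A N0) <= psi (cball x r))%E.
  by apply: le_measure; rewrite ?inE //; exact: cball_meas.
have := le_trans psiA (le_trans h1 h2).
move=> h; have : (1 < 2%:E :> \bar R)%E by rewrite lte_fin; lra.
by rewrite ltNge h.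
Qed.

End S.
Lemma recurrence (R : realType) (dO : measure_display) (Omega : measurableType dO)
  (P : probability Omega R) (T : Omega -> Omega) (mT : measurable_fun setT T)
  (inv : forall A, measurable A -> P (T @^-1` A) = P A)
  (A0 : set Omega) (mA0 : measurable A0) :
  {ae P, forall w, A0 w -> forall K, exists2 k, (K <= k)%N & A0 (iter k T w)}.
Proof.
have miter : forall k, measurable_fun setT (iter k T).
  elim=> [|k IH]; first exact: measurable_id.
  exact: (measurableT_comp mT IH).
have mpre : forall k A, measurable A -> measurable (iter k T @^-1` A).
  by move=> k A mA; rewrite -[X in measurable X]setTI; exact: miter.
have invk : forall k A, measurable A -> P (iter k T @^-1` A) = P A.
  elim=> [|k IH] A mA; first by [].
  have -> : iter k.+1 T @^-1` A = iter k T @^-1` (T @^-1` A) by [].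
  rewrite IH ?inv //; rewrite -[X in measurable X]setTI; exact: mT.
pose B := [set w | A0 w /\ forall k, ~ A0 (iter k.+1 T w)].
have mB : measurable B.
  have -> : B = A0 `&` \bigcap_k (iter k.+1 T @^-1` (~` A0)).
    apply/seteqP; split => w [h1 h2]; split => //.
      by move=> k _; exact: h2.
    by move=> k; exact: (h2 k I).
  apply: measurableI => //; apply: bigcapT_measurable => k.
  by apply: mpre; exact: measurableC.
pose C := fun j => iter j T @^-1` B.
have mC : forall j, measurable (C j) by move=> j; exact: mpre.
have disj : forall j l, (j < l)%N -> C j `&` C l = set0.
  move=> j l jl; apply/seteqP; split => // w [[_ Hj] [Al _]].
  apply: (Hj (l - j.+1)%N).
  by rewrite -iterD addSnnS subnK.
pose U := fun N => [set w | exists2 j, (j < N)%N & C j w].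
have US : forall N, U N.+1 = U N `|` C N.
  move=> N; apply/seteqP; split => w.
    move=> [j]; rewrite ltnS leq_eqVlt => /orP[/eqP -> | jN] Cj; first by right.
    by left; exists j.
  by move=> [[j jN Cj]|CN]; [exists j => //; exact: ltnW | exists N].
have U0 : U 0%N = set0.
  by apply/seteqP; split => // w [j]; rewrite ltn0.
have mU : forall N, measurable (U N).
  elim=> [|N IH]; first by rewrite U0.
  by rewrite US; exact: measurableU.
have PBfin : P B = (fine (P B))%:E.
  rewrite fineK // ge0_fin_numE //; apply: le_lt_trans (probability_le1 P mB) _.
  exact: ltey.
set pb := fine (P B) in PBfin.
have PU : forall N, P (U N) = (N%:R * pb)%:E.
  elim=> [|N IH]; first by rewrite U0 measure0 mul0r.
  rewrite US measureU //; last first.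
    by apply/seteqP; split => // w [[j jN Cj] CN]; rewrite -(disj j N jN); split.
  transitivity ((N%:R * pb)%:E + pb%:E)%E.
    by congr (_ + _)%E; [exact: IH | rewrite -PBfin; exact: invk].
  by rewrite -EFinD -nat1r mulrDl mul1r addrC.
have pb0 : pb = 0.
  have pbge0 : 0 <= pb by rewrite /pb fine_ge0 // measure_ge0.
  have Nle : forall N, N%:R * pb <= 1.
    by move=> N; rewrite -lee_fin -PU; exact: probability_le1.
  apply/eqP; rewrite eq_le pbge0 andbT; rewrite leNgt; apply/negP => pbp.
  have := Nle (Num.truncn pb^-1).+1; apply/negP; rewrite -ltNge.
  rewrite -ltr_pdivrMr // div1r; exact: truncnS_gt.
have nC : forall j, P.-negligible (C j).
  move=> j; exists (C j); split => //; by rewrite invk // PBfin pb0.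
have := negligible_bigcup nC.
apply: negligibleS => w /= /not_implyP [A0w] /existsNP [K].
move=> nex.
have Hk : forall k, (K <= k)%N -> ~ A0 (iter k T w).
  by move=> k Kk Ak; apply: nex; exists k.
elim: K Hk {nex} => [|K IH] Hk.
  by exfalso; apply: (Hk 0%N).
have [AK|nAK] := pselect (A0 (iter K T w)).
  exists K => //; split => // k.
  rewrite -iterD; apply: Hk.
  by rewrite addSn ltnS leq_addl.
apply: IH => k; rewrite leq_eqVlt => /orP[/eqP <- //|]; exact: Hk.
Qed.

Section S2.
Variables (R : realType) (d : nat).
Implicit Types (x y z t u v : 'rV[R]_d).

Lemma ball_meas c (r : R) : measurable (ball c r : set (borelRd R d)).
Proof. apply: open_meas; exact: ball_open. Qed.

Lemma ball_transl c (r : R) s :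
  [set b + s | b in (ball c r : set 'rV[R]_d)] = ball (c + s) r.
Proof.
apply/seteqP; split => y.
  move=> [b Bb <-]; move: Bb; rewrite -!ball_normE /ball_ /=.
  by rewrite opprD addrACA subrr addr0.
move=> By; exists (y - s); last by rewrite subrK.
move: By; rewrite -!ball_normE /ball_ /=.
by rewrite opprB addrA addrAC.
Qed.

Lemma dotv_delta u (i : 'I_d) : dotv u (delta_mx 0 i) = u ord0 i.
Proof.
rewrite /dotv (bigD1 i) //= mxE !eqxx mulr1 big1 ?addr0 // => l nl.
by rewrite mxE eqxx /= (negPf nl) mulr0.
Qed.

Lemma dotvZr (a : R) u y : dotv u (a *: y) = a * dotv u y.
Proof. by rewrite /dotv mulr_sumr; apply: eq_bigr => i _; rewrite !mxE; ring. Qed.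


Lemma iterPsi (dO : measure_display) (Omega : measurableType dO)
  (theta : 'rV[R]_d -> Omega -> Omega)
  (Psi : Omega -> {measure set (borelRd R d) -> \bar R})
  (stat : forall (s : 'rV[R]_d) (w : Omega) (B : set (borelRd R d)), measurable B ->
         Psi (theta s w) B = Psi w [set (b : 'rV[R]_d) + s | b in B]) s :
  forall k w c r, Psi (iter k (theta s) w) (ball c r) = Psi w (ball (c + k%:R *: s) r).
Proof.
elim=> [|k IH] w c r; first by rewrite scale0r addr0.
rewrite /= stat; last exact: ball_meas.
rewrite ball_transl IH; congr (Psi w (ball _ r)).
by rewrite -natr1 scalerDl scale1r addrA addrAC.
Qed.


Definition cf (n : nat) (b : bool) : R := (if b then 1 else -1) * (2 * n.+1%:R).
Definition rad (n : nat) : R := n.+1%:R.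
Definition sh (n : nat) (b : bool) (i : 'I_d) (k : nat) : 'rV[R]_d :=
  k%:R *: (cf n b *: delta_mx 0 i).
Definition eps (m : nat) : R := m.+1%:R^-1.

Lemma det_half (mu : {measure set (borelRd R d) -> \bar R})
  (G : forall (n m : nat) (i : 'I_d) (b : bool),
        ((eps m)%:E < mu (ball (0%R : 'rV[R]_d) (rad n)))%E ->
        forall K, exists2 k, (K <= k)%N &
          ((eps m)%:E < mu (ball (sh n b i k) (rad n)))%E)
  (nz : exists B, measurable B /\ mu B <> 0%E) :
  forall H, is_halfspace H -> mu H = +oo%E.
Proof.
move=> H [u [a [u0 ->]]].
have [n npos] : exists n, (0 < mu (ball (0%R : 'rV[R]_d) (rad n)))%E.
  apply: contrapT => /forallNP hn.
  have h0 : forall k, mu (ball (0%R : 'rV[R]_d) (rad k)) = 0%E.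
    move=> k; apply/eqP; rewrite eq_le measure_ge0 andbT leNgt; apply/negP; exact: hn.
  case: nz => B [mB nB]; apply: nB; apply/eqP; rewrite eq_le measure_ge0 andbT.
  have := measure_sigma_subadditive mu (fun k => ball_meas 0 (rad k)) mB.
  rewrite /subset_sigma_subadditive eseries0; last by move=> k _ _; exact: h0.
  apply => y _; exists (Num.truncn `|y|) => //=.
  rewrite -ball_normE /ball_ /= sub0r normrN /rad.
  exact: (truncnS_gt `|y|).
have [m mpos] : exists m, ((eps m)%:E < mu (ball (0%R : 'rV[R]_d) (rad n)))%E.
  move: npos; case E: (mu (ball (0%R : 'rV[R]_d) (rad n))) => [r| |].
  - rewrite lte_fin => r0; exists (Num.truncn r^-1); rewrite lte_fin /eps.
    rewrite -[X in _ < X]invrK ltf_pV2 ?posrE ?invr_gt0 ?ltr0Sn //; exact: truncnS_gt.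
  - by move=> _; exists 0%N; exact: ltey.
  - by rewrite ltNge leNye.
have [i ui] : exists i, u ord0 i != 0.
  apply: contrapT => /forallNP h; move/eqP: u0; apply; apply/rowP => j.
  rewrite mxE; apply/eqP/negPn/negP => hh; exact: h j hh.
pose b := (0 < u ord0 i).
pose c := cf n b.
pose rho := rad n.
have rho0 : 0 < rho by rewrite /rho /rad ltr0Sn.
have cu : 0 < c * u ord0 i.
  rewrite /c /cf /b; case: ifPn => hb; first by rewrite mul1r mulr_gt0 // mulr_gt0.
  rewrite mulN1r mulNr -mulrN mulr_gt0 ?mulr_gt0 ?ltr0Sn // oppr_gt0.
  by rewrite lt_neqAle ui /= leNgt.
have cabs : `|c| = 2 * rho.
  rewrite /c /cf /rho /rad; case: ifPn => _; first by rewrite mul1r ger0_norm.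
  by rewrite mulN1r normrN ger0_norm.
pose q := `|c| * rho.
have q0 : 0 < q by rewrite /q cabs !mulr_gt0.
have cc : c * c = 2 * q.
  have e : c * c = `|c| * `|c| by rewrite -normrM ger0_norm // -expr2 sqr_ge0.
  by rewrite e /q cabs; ring.
have shi : forall k, (sh n b i k) ord0 i = k%:R * c.
  by move=> k; rewrite /sh !mxE eqxx mulr1.
have hbk : forall k y, ball (sh n b i k) rho y ->
    `|c * y ord0 i - k%:R * (2 * q)| < q.
  move=> k y; rewrite -ball_normE /ball_ /= => By.
  have hc : `|(sh n b i k) ord0 i - y ord0 i| < rho.
    apply: le_lt_trans By; have := @coord_le R d (sh n b i k - y) i; by rewrite !mxE.
  have -> : c * y ord0 i - k%:R * (2 * q) = - c * ((sh n b i k) ord0 i - y ord0 i).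
    by rewrite shi -cc; ring.
  by rewrite normrM normrN /q ltr_pM2l // normr_gt0 -normr_gt0 cabs mulr_gt0.
pose X := (a + d%:R * `|u| * rho) / (c * u ord0 i).
pose K0 := (Num.truncn X).+1.
have hsubH : forall k, (K0 <= k)%N ->
    ball (sh n b i k) rho `<=` open_halfspace u a.
  move=> k Kk y By; rewrite /open_halfspace /=.
  have Xk : X < k%:R.
    apply: lt_le_trans (truncnS_gt X) _; by rewrite ler_nat.
  have e1 : dotv u y = k%:R * (c * u ord0 i) + dotv u (y - sh n b i k).
    by rewrite (@dotvB R d) /sh !dotvZr dotv_delta -/c; ring.
  have e2 : `|dotv u (y - sh n b i k)| <= d%:R * `|u| * rho.
    apply: le_trans (@dotv_bound R d _ _) _; apply: ler_wpM2l.
      by rewrite mulr_ge0.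
    by move: By; rewrite -ball_normE /ball_ /= distrC => /ltW.
  move: Xk; rewrite /X ltr_pdivrMr // => Xk.
  move: e2; rewrite ler_norml => /andP[e2 _].
  rewrite e1; move: Xk e2.
  set P1 := k%:R * (c * u ord0 i); set P2 := dotv u (y - sh n b i k).
  set P3 := d%:R * `|u| * rho.
  lra.
pose Z := fun K : nat => (open_halfspace u a `&`
   [set y : 'rV[R]_d | (2 * K%:R - 1) * q < c * y ord0 i] : set (borelRd R d)).
have mH : measurable (open_halfspace u a : set (borelRd R d)).
  apply: (@open_meas R d).
  have -> : (open_halfspace u a : set 'rV[R]_d) = dotv u @^-1` [set x | a < x] by [].
  apply: open_comp; last exact: open_gt.
  by move=> y _; exact: (@dotv_cont R d).
have mZ : forall K, measurable (Z K).
  move=> K; apply: measurableI => //; apply: (@open_meas R d).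
  have -> : [set y : 'rV[R]_d | (2 * K%:R - 1) * q < c * y ord0 i] =
     (fun y : 'rV[R]_d => c * y ord0 i) @^-1` [set x | (2 * K%:R - 1) * q < x] by [].
  apply: open_comp; last exact: open_gt.
  move=> y _.
  have := @continuousM R _ (fun=> c) (fun z : 'rV[R]_d => z ord0 i) y
    (@cst_continuous _ _ _ _) (@coordc R d i y).
  by [].
have claim : forall N K, (K0 <= K)%N -> ((N%:R * eps m)%:E <= mu (Z K))%E.
  elim=> [|N IH] K hK; first by rewrite mul0r measure_ge0.
  have [k Kk hk] := G n m i b mpos K.
  have K0k : (K0 <= k)%N by apply: leq_trans Kk.
  have Kkr : K%:R <= k%:R :> R by rewrite ler_nat.
  have sub1 : ball (sh n b i k) rho `<=` Z K.
    move=> y By; split; first exact: hsubH By.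
    have := hbk k y By; rewrite ltr_norml => /andP[h1 _] /=.
    move: h1 Kkr q0; set P1 := c * y ord0 i; set kk := k%:R; set KK := K%:R.
    nra.
  have sub2 : Z k.+1 `<=` Z K.
    move=> y [Hy hy]; split => //=; apply: le_lt_trans hy.
    rewrite ler_pM2r // lerD2r ler_pM2l // ler_nat; exact: leqW.
  have dis : ball (sh n b i k) rho `&` Z k.+1 = set0.
    apply/seteqP; split => // y [By [_ /= hy]].
    have := hbk k y By; rewrite ltr_norml => /andP[_ h2].
    move: h2 hy; rewrite -natr1; set P1 := c * y ord0 i; set kk := k%:R.
    nra.
  have le1 : (mu (ball (sh n b i k) rho `|` Z k.+1) <= mu (Z K))%E.
    apply: le_measure; rewrite ?inE //; first exact: measurableU (ball_meas _ _) (mZ _).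
    by move=> y [/sub1|/sub2].
  rewrite measureU // in le1; last exact: ball_meas.
  apply: le_trans le1.
  rewrite -natr1 mulrDl mul1r EFinD addrC; apply: leeD; first exact: ltW.
  by apply: IH; exact: leqW.
have hH : forall N, ((N%:R * eps m)%:E <= mu (open_halfspace u a))%E.
  move=> N; apply: le_trans (claim N K0 (leqnn _)) _.
  by apply: le_measure; rewrite ?inE // => y [].
have eps0 : 0 < eps m by rewrite /eps invr_gt0 ltr0Sn.
case E: (mu (open_halfspace u a)) (hH 0%N) => [r| |] // .
move=> _; exfalso.
have := hH (Num.truncn (r / eps m)).+1; rewrite E lee_fin.
apply/negP; rewrite -ltNge -ltr_pdivrMr //; exact: truncnS_gt.
Qed.


Lemma part2 (dO : measure_display) (Omega : measurableType dO)
  (P : probability Omega R) (theta : 'rV[R]_d -> Omega -> Omega)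
  (Psi : Omega -> {measure set (borelRd R d) -> \bar R})
  (mflow : measurable_fun setT (fun p : (borelRd R d * Omega)%type => theta p.1 p.2))
  (inv : forall (s : 'rV[R]_d) (A : set Omega), measurable A ->
         P (theta s @^-1` A) = P A)
  (mPsi : forall B : set (borelRd R d), measurable B ->
         measurable_fun [set: Omega] ((fun w => Psi w B) : Omega -> \bar R))
  (stat : forall (s : 'rV[R]_d) (w : Omega) (B : set (borelRd R d)), measurable B ->
         Psi (theta s w) B = Psi w [set (b : 'rV[R]_d) + s | b in B])
  (nz : {ae P, forall w, exists B : set (borelRd R d), measurable B /\ Psi w B <> 0%E}) :
  {ae P, forall w, forall H, is_halfspace H -> Psi w H = +oo%E}.
Proof.
have mT : forall s, measurable_fun setT (theta s).
  move=> s; have := measurable_fun_pair2 (s : borelRd R d) mflow; by [].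
have mA0 : forall n m, measurable [set w | ((eps m)%:E < Psi w (ball (0%R : 'rV[R]_d) (rad n)))%E].
  move=> n m; rewrite -[X in measurable X]setTI.
  exact: (emeasurable_fun_o_infty measurableT (mPsi _ (ball_meas _ _))).
have Gall : {ae P, forall w, forall n m j l : nat, forall (i : 'I_d) (b : bool),
   nat_of_ord i = j -> b = odd l ->
   ((eps m)%:E < Psi w (ball (0%R : 'rV[R]_d) (rad n)))%E ->
        forall K, exists2 k, (K <= k)%N &
          ((eps m)%:E < Psi w (ball (sh n b i k) (rad n)))%E}.
  apply: ae_foralln => n; apply: ae_foralln => m; apply: ae_foralln => j.
  apply: ae_foralln => l.
  case: (ltnP j d) => hj; last first.
    by apply: aeW => w i b ij; exfalso; move: (ltn_ord i); rewrite ij ltnNge hj.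
  pose i0 := Ordinal hj.
  pose s := cf n (odd l) *: (delta_mx 0 i0 : 'rV[R]_d).
  have := @recurrence R dO Omega P (theta s) (mT s) (inv s) _ (mA0 n m).
  apply: filterS => w Hw i b ij bl A0w K.
  have -> : i = i0 by apply: val_inj.
  have [k Kk hk] := Hw A0w K; exists k => //.
  rewrite bl; move: hk => /=.
  by rewrite (@iterPsi dO Omega theta Psi stat) add0r.
move: nz Gall; apply: filterS2 => w nzw Gw.
apply: det_half nzw => n m i b.
exact: (Gw n m i b i b erefl (esym (oddb b))).
Qed.

End S2.

Theorem mainTheorem16 (R : realType) (d : nat) :
  (forall psi : {measure set (borelRd R d) -> \bar R},
      locally_finite psi ->
      (1 <= psi setT)%E ->
      (forall H, is_halfspace H -> psi H = +oo%E) ->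
      forall xi : 'rV[R]_d, bounded_set_Rd (territory psi xi))
  /\
  (forall (dO : measure_display) (Omega : measurableType dO)
          (P : probability Omega R)
          (theta : 'rV[R]_d -> Omega -> Omega)
          (Psi : Omega -> {measure set (borelRd R d) -> \bar R}),
      (* measurable flow *)
      theta 0 = id ->
      (forall s t : 'rV[R]_d, theta (s + t) = theta s \o theta t) ->
      measurable_fun setT (fun p : (borelRd R d * Omega)%type => theta p.1 p.2) ->
      (* P is invariant under the flow *)
      (forall (s : 'rV[R]_d) (A : set Omega), measurable A ->
         P (theta s @^-1` A) = P A) ->
      (* Psi is a random (locally finite) measure *)
      (forall w, locally_finite (Psi w)) ->
      (forall B : set (borelRd R d), measurable B ->
         measurable_fun [set: Omega] ((fun w => Psi w B) : Omega -> \bar R)) ->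
      (* stationarity *)
      (forall (s : 'rV[R]_d) (w : Omega) (B : set (borelRd R d)), measurable B ->
         Psi (theta s w) B = Psi w [set (b : 'rV[R]_d) + s | b in B]) ->
      (* almost surely non-zero *)
      {ae P, forall w, exists B : set (borelRd R d), measurable B /\ Psi w B <> 0%E} ->
      {ae P, forall w, forall xi : 'rV[R]_d, bounded_set_Rd (territory (Psi w) xi)}).
Proof.
split.
  by move=> psi _ _ Hh xi; exact: (@core R d psi Hh xi).
move=> dO Omega P theta Psi _ _ mflow inv _ mPsi stat nz.
have := @part2 R d dO Omega P theta Psi mflow inv mPsi stat nz.
by apply: filterS => w Hw xi; exact: (@core R d (Psi w) Hw xi).
Qed.
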